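(* For every hypothesis class $\mathcal{H}\subseteq\{0,1\}^{\mathcal{X}}$, $\mathtt{CD}(\mathcal{H})\le\max\{2\,\mathtt{LD}(\mathcal{H})\log_2(\mathtt{LD}(\mathcal{H})),\,300\}$ (with the convention $0\log_2 0=0$).
   Context: A dataset of size $m$ is $S=((x_1,y_1),\dots,(x_m,y_m))\in(\mathcal{X}\times\{0,1\})^m$; it is $\mathcal{H}$-realizable if some $h\in\mathcal{H}$ satisfies $h(x_i)=y_i$ for all $i$. $G_m(\mathcal{H})$ is the graph on realizable datasets of size $m$ with $S,S'$ adjacent iff there is $x$ with $(x,0)$ appearing in $S$ and $(x,1)$ appearing in $S'$; $\omega_m$ is its clique number; $\mathtt{CD}(\mathcal{H})=\sup\{m:\omega_m=2^m\}$. A mistake tree is a complete binary tree whose internal nodes are labeled by points of $\mathcal{X}$, each internal node having one outgoing edge labeled $0$ and one labeled $1$; a root-to-leaf path yields the sequence of (node label, edge label) pairs. $\mathcal{H}$ shatters the tree if every root-to-leaf path is realizable by $\mathcal{H}$. $\mathtt{LD}(\mathcal{H})$ is the largest depth of a complete mistake tree shattered by $\mathcal{H}$ ($\infty$ if unbounded). *)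

(* Defs.v *)
From Stdlib Require Import Reals List.
Import ListNotations.
Set Implicit Arguments.

(* Labels {0,1} are encoded as bool: 0 = false, 1 = true.
   A hypothesis class over domain X is a set of functions X -> bool. *)
Definition hclass (X : Type) := (X -> bool) -> Prop.

Definition dataset (X : Type) := list (X * bool).

Definition realizable (X : Type) (H : hclass X) (S : dataset X) : Prop :=
  exists h, H h /\ forall x y, In (x, y) S -> h x = y.

Definition vertex (X : Type) (H : hclass X) (m : nat) (S : dataset X) : Prop :=
  length S = m /\ realizable H S.

Definition adjacent (X : Type) (S S' : dataset X) : Prop :=
  exists x, (In (x, false) S /\ In (x, true) S') \/
            (In (x, false) S' /\ In (x, true) S).

Definition is_clique (X : Type) (H : hclass X) (m : nat) (C : list (dataset X)) : Prop :=
  NoDup C /\ (forall S, In S C -> vertex H m S) /\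
  (forall S S', In S C -> In S' C -> S <> S' -> adjacent S S').

Definition has_clique (X : Type) (H : hclass X) (m k : nat) : Prop :=
  exists C, is_clique H m C /\ length C = k.

Definition clique_number_eq (X : Type) (H : hclass X) (m k : nat) : Prop :=
  has_clique H m k /\ forall k', has_clique H m k' -> k' <= k.

(* Mistake trees: binary trees whose internal nodes are labeled by points;
   the left child is the 0-edge, the right child the 1-edge. *)
Inductive mtree (X : Type) : Type :=
| Leaf : mtree X
| Node : X -> mtree X -> mtree X -> mtree X.
Arguments Leaf {X}.

Fixpoint complete_depth (X : Type) (t : mtree X) (d : nat) : Prop :=
  match t, d with
  | Leaf, 0 => True
  | Node _ t0 t1, S d' => complete_depth t0 d' /\ complete_depth t1 d'
  | _, _ => False
  end.

Fixpoint paths (X : Type) (t : mtree X) : list (dataset X) :=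
  match t with
  | Leaf => [ [] ]
  | Node x t0 t1 => map (cons (x, false)) (paths t0) ++ map (cons (x, true)) (paths t1)
  end.

Definition shatters (X : Type) (H : hclass X) (t : mtree X) : Prop :=
  forall p, In p (paths t) -> realizable H p.

Definition shatters_depth (X : Type) (H : hclass X) (d : nat) : Prop :=
  exists t, complete_depth t d /\ shatters H t.

Definition LD_eq (X : Type) (H : hclass X) (d : nat) : Prop :=
  shatters_depth H d /\ forall d', shatters_depth H d' -> d' <= d.

Definition two_d_log2_d (d : nat) : R :=
  match d with
  | 0 => 0%R
  | _ => (2 * INR d * (ln (INR d) / ln 2))%R
  end.

(* Main.v *)
Require Import Defs.
From Stdlib Require Import Reals List.
From Stdlib Require Import Arith Lia ZArith Lra ClassicalEpsilon.
Import ListNotations.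

Lemma bern n m : n <= m + 1 -> (m + 1 - n) * (m + 1) ^ n <= m ^ n * (m + 1).
Proof.
  induction n as [|n IH]; intros Hn; simpl; [lia|].
  specialize (IH ltac:(lia)).
  set (P := (m+1)^n) in *. set (Q := m^n) in *.
  assert (Hk : (m + 1 - S n) * (m + 1) <= m * (m + 1 - n)) by nia.
  nia.
Qed.

Lemma step1 n m : 2 * n <= m -> (m + 1) ^ n <= 2 * m ^ n.
Proof.
  intros H. pose proof (bern n m ltac:(lia)).
  set (P := (m+1)^n) in *. set (Q := m^n) in *. nia.
Qed.

Lemma stepQ n m : 2 * n <= m -> (2 * m) ^ n <= 2 ^ m -> (2 * (m + 1)) ^ n <= 2 ^ (m + 1).
Proof.
  intros H1 H2. rewrite !Nat.pow_mul_l in *. rewrite Nat.pow_add_r.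
  pose proof (step1 n m H1). set (P := (m+1)^n) in *. set (Q := m^n) in *.
  set (T := 2^n) in *. set (U := 2^m) in *. simpl (2^1). nia.
Qed.

Lemma upQ n m0 j : 2 * n <= m0 -> (2 * m0) ^ n <= 2 ^ m0 -> (2 * (m0 + j)) ^ n <= 2 ^ (m0 + j).
Proof.
  intros H1 H2. induction j as [|j IH].
  - rewrite Nat.add_0_r; auto.
  - replace (m0 + S j) with ((m0 + j) + 1) by lia. apply stepQ; auto; lia.
Qed.

Lemma pow_le_Z a b c e : (Z.of_nat a ^ Z.of_nat b <= Z.of_nat c ^ Z.of_nat e)%Z -> a^b <= c^e.
Proof. intros H. rewrite <- !Nat2Z.inj_pow in H. lia. Qed.

Lemma lemA q : 5 <= q -> 16 * (q + 1) <= 3 * 2 ^ q.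
Proof.
  intros H. replace q with (5 + (q - 5)) by lia. generalize (q - 5). intros j.
  induction j as [|j IH]. - simpl. lia.
  - replace (5 + S j) with (S (5 + j)) by lia. rewrite Nat.pow_succ_r'. lia.
Qed.

Lemma lemL1 N : 5 <= N -> 4 * 3 ^ N <= 4 ^ N.
Proof.
  intros H. replace N with (5 + (N - 5)) by lia. generalize (N - 5). intros j.
  induction j as [|j IH]. - simpl. lia.
  - replace (5 + S j) with (S (5 + j)) by lia. rewrite !Nat.pow_succ_r'. lia.
Qed.

Lemma lemL2 q : 5 <= q -> 2 * 3 ^ (2 ^ q + 1) * 4 ^ q <= 4 ^ (2 ^ q + 1).
Proof.
  intros H. replace q with (5 + (q - 5)) by lia. generalize (q - 5). intros j.
  induction j as [|j IH].
  - rewrite Nat.add_0_r.     assert (E: 2 ^ 5 + 1 = 33) by reflexivity. rewrite E.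
    apply Nat2Z.inj_le. rewrite !Nat2Z.inj_mul, !Nat2Z.inj_pow. vm_compute. discriminate.
  - replace (5 + S j) with (S (5 + j)) by lia.
    set (k := 5 + j) in *.
    assert (Hk : 32 <= 2 ^ k) by (change 32 with (2^5); apply Nat.pow_le_mono_r; lia).
    pose proof (lemL1 (2 ^ k) ltac:(lia)).
    assert (E1 : 3 ^ (2 ^ S k + 1) = 3 ^ (2 ^ k + 1) * 3 ^ 2 ^ k).
    { rewrite <- Nat.pow_add_r. f_equal. rewrite Nat.pow_succ_r'. lia. }
    assert (E2 : 4 ^ (2 ^ S k + 1) = 4 ^ (2 ^ k + 1) * 4 ^ 2 ^ k).
    { rewrite <- Nat.pow_add_r. f_equal. rewrite Nat.pow_succ_r'. lia. }
    rewrite E1, E2, Nat.pow_succ_r'.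
    set (a := 3 ^ 2 ^ k) in *. set (b := 4 ^ 2 ^ k) in *. set (c := 4 ^ k) in *.
    set (u := 3 ^ (2^k+1)) in *. set (v := 4 ^ (2^k+1)) in *. nia.
Qed.

Lemma lemL q n : 5 <= q -> 2 ^ q + 1 <= n -> 2 * 3 ^ n * 4 ^ q <= 4 ^ n.
Proof.
  intros Hq Hn. replace n with ((2^q+1) + (n - (2^q+1))) by lia.
  generalize (n - (2^q+1)). intros j. induction j as [|j IH].
  - rewrite Nat.add_0_r. apply lemL2; auto.
  - rewrite Nat.add_succ_r, !Nat.pow_succ_r'. nia.
Qed.

Lemma keyK q d : 5 <= q -> 2 ^ q <= d -> 2 * (4 * (q + 1)) ^ (d + 1) <= (2 ^ q) ^ (d - 1).
Proof.
  intros Hq Hd.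
  assert (HA := lemA q Hq).
  assert (HL := lemL q (d+1) Hq ltac:(lia)).
  assert (H1 : (16 * (q + 1)) ^ (d+1) <= (3 * 2 ^ q) ^ (d+1)) by (apply Nat.pow_le_mono_l; lia).
  replace (16 * (q+1)) with (4 * (4 * (q+1))) in H1 by lia.
  rewrite (Nat.pow_mul_l 4 (4 * (q+1))), (Nat.pow_mul_l 3 (2^q)) in H1.
  assert (E4 : 4 ^ q = 2 ^ q * 2 ^ q).
  { rewrite <- Nat.pow_add_r. replace 4 with (2^2) by reflexivity. rewrite <- Nat.pow_mul_r. f_equal; lia. }
  assert (E5 : (2 ^ q) ^ (d + 1) = (2 ^ q) ^ (d - 1) * (2 ^ q * 2 ^ q)).
  { replace (d+1) with ((d-1) + 2) by lia. rewrite Nat.pow_add_r. simpl. lia. }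
  rewrite E4 in HL. rewrite E5 in H1.
  assert (Hb : 0 < 4 ^ (d+1)) by (apply Nat.neq_0_lt_0, Nat.pow_nonzero; lia).
  set (a := (4 * (q+1)) ^ (d+1)) in *. set (b := 4 ^ (d+1)) in *.
  set (c := 3 ^ (d+1)) in *. set (e := 2 ^ q) in *. set (f := e ^ (d-1)) in *.
  assert (S1 : 2 * a * b <= 2 * c * (f * (e * e))) by lia.
  assert (S2 : 2 * c * (f * (e * e)) = f * (2 * c * (e * e))) by ring.
  assert (S3 : f * (2 * c * (e * e)) <= f * b) by (apply Nat.mul_le_mono_l; lia).
  assert (S4 : 2 * a * b <= f * b) by lia.
  rewrite Nat.mul_comm in S4. rewrite (Nat.mul_comm f b) in S4.
  apply Nat.mul_le_mono_pos_l in S4; lia.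
Qed.

Lemma natmain d m : 301 <= m -> 2 ^ m < (2 * m) ^ (d + 1) -> 2 ^ m <= d ^ (2 * d).
Proof.
  intros Hm Hlt.
  destruct (le_lt_dec (2 ^ m) (d ^ (2 * d))) as [ok|Hc]; [exact ok|exfalso].
  destruct (le_lt_dec d 31) as [Hd|Hd].
  - assert (Q : (2 * 301) ^ (d + 1) <= 2 ^ 301).
    { apply Nat.le_trans with (602 ^ 32).
      - apply Nat.pow_le_mono_r; lia.
      - apply pow_le_Z. vm_compute. discriminate. }
    pose proof (upQ (d+1) 301 (m - 301) ltac:(lia) Q) as R.
    replace (301 + (m - 301)) with m in R by lia. lia.
  - set (q := Nat.log2 d).
    assert (Hq : 2 ^ q <= d < 2 ^ S q) by (apply Nat.log2_spec; lia).
    assert (Hq5 : 5 <= q).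
    { apply (Nat.log2_le_pow2 d 5); [lia|]. simpl. lia. }
    assert (HD : 0 < d ^ (2 * d)) by (apply Nat.neq_0_lt_0, Nat.pow_nonzero; lia).
    set (m0 := Nat.log2 (d ^ (2 * d))).
    assert (Hm0 : 2 ^ m0 <= d ^ (2 * d) < 2 ^ S m0) by (apply Nat.log2_spec; lia).
    assert (Hm0m : m0 <= m).
    { destruct (le_lt_dec m0 m) as [h|h]; auto.
      pose proof (Nat.pow_le_mono_r 2 m m0 ltac:(lia) ltac:(lia)). lia. }
    assert (Hup : m0 < 2 * d * (q + 1)).
    { apply (Nat.pow_lt_mono_r_iff 2); [lia|].
      apply Nat.le_lt_trans with (d ^ (2 * d)); [lia|].
      replace (2 * d * (q + 1)) with ((q+1) * (2 * d)) by lia. rewrite (Nat.pow_mul_r 2).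
      apply Nat.pow_lt_mono_l; [lia|]. replace (q+1) with (S q) by lia. lia. }
    assert (Hlow : 2 * d * q <= m0).
    { assert (2 * d * q < S m0); [|lia].
      apply (Nat.pow_lt_mono_r_iff 2); [lia|].
      apply Nat.le_lt_trans with (d ^ (2 * d)); [|lia].
      replace (2 * d * q) with (q * (2 * d)) by lia. rewrite (Nat.pow_mul_r 2). apply Nat.pow_le_mono_l; lia. }
    assert (Q : (2 * m0) ^ (d + 1) <= 2 ^ m0).
    { assert (K := keyK q d Hq5 ltac:(lia)).
      assert (H1 : (2 * m0) ^ (d+1) <= (d * (4 * (q+1))) ^ (d+1)) by (apply Nat.pow_le_mono_l; lia).
      rewrite (Nat.pow_mul_l d (4 * (q+1))) in H1.
      assert (H2 : (2 ^ q) ^ (d - 1) <= d ^ (d - 1)) by (apply Nat.pow_le_mono_l; lia).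
      assert (E : d ^ (2 * d) = d ^ (d+1) * d ^ (d - 1)) by (rewrite <- Nat.pow_add_r; f_equal; lia).
      rewrite E in Hm0. simpl (2 ^ S m0) in Hm0.
      set (a := (4 * (q+1)) ^ (d+1)) in *. set (b := d ^ (d+1)) in *.
      set (c := d ^ (d-1)) in *. set (e := (2 ^ q) ^ (d-1)) in *.
      set (x := (2 * m0) ^ (d+1)) in *. set (y := 2 ^ m0) in *.
      assert (T1 : b * (2 * a) <= b * c) by (apply Nat.mul_le_mono_l; lia).
      assert (T2 : 2 * x <= b * (2 * a)) by nia.
      lia. }
    pose proof (upQ (d+1) m0 (m - m0) ltac:(nia) Q) as R.
    replace (m0 + (m - m0)) with m in R by lia. lia.
Qed.

Definition ind (P : Prop) : nat := if excluded_middle_informative P then 1 else 0.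

Lemma ind_true (P : Prop) : P -> ind P = 1.
Proof. unfold ind; destruct (excluded_middle_informative P); tauto. Qed.
Lemma ind_false (P : Prop) : ~ P -> ind P = 0.
Proof. unfold ind; destruct (excluded_middle_informative P); tauto. Qed.
Lemma ind_le1 (P : Prop) : ind P <= 1.
Proof. unfold ind; destruct (excluded_middle_informative P); lia. Qed.
Lemma ind_compl (P : Prop) : ind P + ind (~ P) = 1.
Proof. unfold ind; destruct (excluded_middle_informative P), (excluded_middle_informative (~P)); tauto || lia. Qed.

Fixpoint sumf {A} (l : list A) (f : A -> nat) : nat :=
  match l with [] => 0 | a :: l => f a + sumf l f end.

Lemma sumf_plus {A} (l : list A) f g : sumf l (fun a => f a + g a) = sumf l f + sumf l g.
Proof. induction l; simpl; lia. Qed.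
Lemma sumf_le {A} (l : list A) f g : (forall a, In a l -> f a <= g a) -> sumf l f <= sumf l g.
Proof. induction l; simpl; intros H; [lia|]. specialize (H a (or_introl eq_refl)) as H1.
  assert (sumf l f <= sumf l g) by (apply IHl; intros; apply H; auto). lia. Qed.
Lemma sumf_ext {A} (l : list A) f g : (forall a, In a l -> f a = g a) -> sumf l f = sumf l g.
Proof. intros H. apply Nat.le_antisymm; apply sumf_le; intros; rewrite H; auto. Qed.
Lemma sumf_mul_l {A} (l : list A) c f : sumf l (fun a => c * f a) = c * sumf l f.
Proof. induction l; simpl; lia. Qed.
Lemma sumf_mul_r {A} (l : list A) c f : sumf l (fun a => f a * c) = sumf l f * c.
Proof. induction l; simpl; lia. Qed.
Lemma sumf_const {A} (l : list A) c : sumf l (fun _ => c) = c * length l.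
Proof. induction l; simpl; lia. Qed.
Lemma sumf_elem {A} (l : list A) f a : In a l -> f a <= sumf l f.
Proof. induction l as [|b l IH]; simpl; [intros []|]. intros [->|Hi]; [lia|]. specialize (IH Hi); lia. Qed.
Lemma sumf_swap {A B} (l : list A) (l' : list B) f :
  sumf l (fun a => sumf l' (fun b => f a b)) = sumf l' (fun b => sumf l (fun a => f a b)).
Proof. induction l; simpl. - induction l'; simpl; lia.
  - rewrite IHl. rewrite <- sumf_plus. reflexivity. Qed.

Definition decb (P : Prop) : bool := if excluded_middle_informative P then true else false.
Lemma decb_spec P : decb P = true <-> P.
Proof. unfold decb; destruct (excluded_middle_informative P); split; congruence || tauto. Qed.

Lemma sumf_ind_filter {A} (l : list A) (P : A -> Prop) :
  sumf l (fun a => ind (P a)) = length (filter (fun a => decb (P a)) l).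
Proof. induction l; simpl; auto. rewrite IHl.
  replace (ind (P a)) with (if decb (P a) then 1 else 0)
    by (unfold ind, decb; destruct (excluded_middle_informative (P a)); auto). destruct (decb (P a)); simpl; lia. Qed.

Lemma sumf_ind_NoDup {A} (pts L : list A) :
  NoDup pts -> sumf pts (fun x => ind (In x L)) <= length L.
Proof.
  intros Hn. rewrite sumf_ind_filter. apply NoDup_incl_length.
  - apply NoDup_filter; auto.
  - intros x Hx. apply filter_In in Hx. apply decb_spec. tauto.
Qed.

Lemma sumf_eq_le1 {A} (l : list A) a : NoDup l -> sumf l (fun b => ind (a = b)) <= 1.
Proof.
  induction 1; simpl; [lia|].
  destruct (excluded_middle_informative (a = x)) as [->|ne].
  - rewrite ind_true by auto.
    rewrite (sumf_ext l _ (fun _ => 0)). rewrite sumf_const; lia.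
    intros b Hb. apply ind_false. intros ->. contradiction.
  - rewrite ind_false by auto. lia.
Qed.


Definition clq {X} (m : nat) (H : hclass X) (C : list (dataset X)) : Prop :=
  NoDup C /\ (forall S, In S C -> length S <= m /\ realizable H S) /\
  (forall S S', In S C -> In S' C -> S <> S' -> adjacent S S').

Definition cnt {X} (C : list (dataset X)) (b : bool) (x : X) : nat :=
  sumf C (fun S => ind (In (x, b) S)).

Lemma real_no_both {X} (H : hclass X) (S : dataset X) x :
  realizable H S -> In (x,false) S -> In (x,true) S -> False.
Proof. intros [h [_ Hh]] H0 H1. apply Hh in H0. apply Hh in H1. congruence. Qed.

Definition xdec {X} (a b : X) : {a = b} + {a <> b} := excluded_middle_informative (a = b).

Lemma split_pt {X} (H : hclass X) m C t : 1 <= m -> 1 <= t -> clq m H C -> 2 * m * t <= length C ->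
  exists x, t <= cnt C false x /\ t <= cnt C true x.
Proof.
  intros Hm Ht [Hnd [Hv Hadj]] HK.
  destruct (classic (exists x, t <= cnt C false x /\ t <= cnt C true x)) as [ok|no]; auto.
  exfalso.
  set (n0 := cnt C false) in *. set (n1 := cnt C true) in *.
  assert (Hmin : forall x, n0 x * n1 x <= (t - 1) * (n0 x + n1 x)).
  { intros x. assert (n0 x < t \/ n1 x < t).
    { destruct (le_lt_dec t (n0 x)); destruct (le_lt_dec t (n1 x)); try lia.
      exfalso; apply no; exists x; auto. }
    nia. }
  set (pts := nodup xdec (flat_map (fun S : dataset X => map fst S) C)).
  assert (Hpn : NoDup pts) by apply NoDup_nodup.
  assert (Hpin : forall S x b, In S C -> In (x, b) S -> In x pts).
  { intros S x b HS Hx. apply nodup_In. apply in_flat_map. exists S; split; auto.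
    apply in_map_iff. exists (x, b); auto. }
  set (K := length C) in *.
  set (g := fun (S S' : dataset X) (x : X) =>
        ind (In (x,false) S) * ind (In (x,true) S') + ind (In (x,true) S) * ind (In (x,false) S')).
  assert (HA : K * (K - 1) <= sumf C (fun S => sumf C (fun S' => ind (S <> S')))).
  { replace (K * (K - 1)) with (sumf C (fun _ => K - 1)) by (rewrite sumf_const; unfold K; lia).
    apply sumf_le. intros S HS.
    pose proof (sumf_eq_le1 C S Hnd) as E1.
    assert (E2 : sumf C (fun S' => ind (S = S')) + sumf C (fun S' => ind (S <> S')) = K).
    { rewrite <- sumf_plus. rewrite (sumf_ext C _ (fun _ => 1)). rewrite sumf_const. unfold K; lia.
      intros b _. apply ind_compl. }
    lia. }
  assert (HB : sumf C (fun S => sumf C (fun S' => ind (S <> S')))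
               <= sumf C (fun S => sumf C (fun S' => sumf pts (g S S')))).
  { apply sumf_le; intros S HS; apply sumf_le; intros S' HS'.
    destruct (excluded_middle_informative (S = S')) as [e|ne].
    - rewrite ind_false by tauto. lia.
    - rewrite ind_true by auto. destruct (Hadj S S' HS HS' ne) as [x [[h0 h1]|[h0 h1]]].
      + eapply Nat.le_trans; [|apply (sumf_elem pts (g S S') x); eapply Hpin; eauto].
        unfold g. rewrite (ind_true (In (x,false) S)), (ind_true (In (x,true) S')) by auto. lia.
      + eapply Nat.le_trans; [|apply (sumf_elem pts (g S S') x); eapply Hpin; eauto].
        unfold g. rewrite (ind_true (In (x,true) S)), (ind_true (In (x,false) S')) by auto. lia. }
  assert (HC : sumf C (fun S => sumf C (fun S' => sumf pts (g S S')))
               = sumf pts (fun x => n0 x * n1 x + n1 x * n0 x)).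
  { rewrite (sumf_ext C _ (fun S => sumf pts (fun x => sumf C (fun S' => g S S' x)))).
    2:{ intros S _. apply sumf_swap. }
    rewrite sumf_swap. apply sumf_ext. intros x _. unfold g.
    rewrite (sumf_ext C _ (fun S => ind (In (x,false) S) * n1 x + ind (In (x,true) S) * n0 x)).
    - rewrite sumf_plus, !sumf_mul_r. reflexivity.
    - intros S _. rewrite sumf_plus, !sumf_mul_l. reflexivity. }
  assert (HD : sumf pts (fun x => n0 x + n1 x) <= m * K).
  { unfold n0, n1, cnt. rewrite (sumf_ext pts _ (fun x => sumf C (fun S => ind (In (x,false) S) + ind (In (x,true) S)))).
    2:{ intros x _. symmetry. apply sumf_plus. }
    rewrite sumf_swap. replace (m * K) with (sumf C (fun _ => m)) by (rewrite sumf_const; reflexivity).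
    apply sumf_le. intros S HS. destruct (Hv S HS) as [Hl Hr].
    eapply Nat.le_trans; [|exact Hl].
    rewrite <- (length_map fst S).
    eapply Nat.le_trans; [|apply (sumf_ind_NoDup pts (map fst S) Hpn)].
    apply sumf_le. intros x _.
    destruct (excluded_middle_informative (In (x,false) S)) as [i0|i0];
    destruct (excluded_middle_informative (In (x,true) S)) as [i1|i1].
    - exfalso; eapply real_no_both; eauto.
    - rewrite (ind_true _ i0), (ind_false _ i1), ind_true. lia. apply in_map_iff. exists (x,false); auto.
    - rewrite (ind_false _ i0), (ind_true _ i1), ind_true. lia. apply in_map_iff. exists (x,true); auto.
    - rewrite (ind_false _ i0), (ind_false _ i1). lia. }
  assert (HE : sumf pts (fun x => n0 x * n1 x + n1 x * n0 x)
               <= sumf pts (fun x => 2 * (t - 1) * (n0 x + n1 x))).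
  { apply sumf_le. intros x _. specialize (Hmin x). lia. }
  rewrite sumf_mul_l in HE.
  assert (HF : K * (K - 1) <= K * (2 * (t - 1) * m)).
  { assert (2 * (t - 1) * sumf pts (fun x => n0 x + n1 x) <= 2 * (t - 1) * (m * K))
      by (apply Nat.mul_le_mono_l; exact HD).
    rewrite HC in HB. nia. }
  assert (HK1 : 0 < K) by nia.
  apply Nat.mul_le_mono_pos_l in HF; [|exact HK1].
  nia.
Qed.

Lemma shatter {X} m k : 1 <= m -> forall (H : hclass X) C, clq m H C -> (2 * m) ^ k <= length C ->
  shatters_depth H k.
Proof.
  intros Hm. induction k as [|k IH]; intros H C HC Hlen.
  - destruct C as [|S C]; simpl in Hlen; [lia|].
    destruct HC as [_ [Hv _]]. destruct (Hv S (or_introl eq_refl)) as [_ [h [Hh _]]].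
    exists Leaf. split; [simpl; auto|]. intros p Hp. simpl in Hp. destruct Hp as [<-|[]].
    exists h; split; auto. intros x y [].
  - assert (Ht : 1 <= (2 * m) ^ k) by (apply Nat.neq_0_lt_0, Nat.pow_nonzero; lia).
    rewrite Nat.pow_succ_r' in Hlen.
    destruct (split_pt H m C ((2*m)^k) Hm Ht HC ltac:(lia)) as [x [H0 H1]].
    assert (Sub : forall b, shatters_depth (fun h => H h /\ h x = b) k).
    { intros b. destruct HC as [Hnd [Hv Hadj]].
      apply (IH _ (filter (fun S => decb (In (x, b) S)) C)).
      - split; [apply NoDup_filter; auto|split].
        + intros S HS. apply filter_In in HS. destruct HS as [HS Hb]. apply (proj1 (decb_spec _)) in Hb.
          destruct (Hv S HS) as [Hl [h [Hh Hag]]]. split; auto.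
          exists h. split; [split; auto|auto].
        + intros S S' HS HS' ne. apply filter_In in HS. apply filter_In in HS'. apply Hadj; tauto.
      - rewrite <- sumf_ind_filter. fold (cnt C b x). destruct b; lia. }
    destruct (Sub false) as [t0 [Hc0 Hs0]]. destruct (Sub true) as [t1 [Hc1 Hs1]].
    exists (Node x t0 t1). split; [simpl; auto|].
    intros p Hp. simpl in Hp. apply in_app_or in Hp.
    destruct Hp as [Hp|Hp]; apply in_map_iff in Hp; destruct Hp as [p' [<- Hp']].
    + destruct (Hs0 p' Hp') as [h [[Hh Hx] Hag]]. exists h. split; auto.
      intros z y [E|E]; [inversion E; subst; auto|auto].
    + destruct (Hs1 p' Hp') as [h [[Hh Hx] Hag]]. exists h. split; auto.
      intros z y [E|E]; [inversion E; subst; auto|auto].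
Qed.
Lemma real_part (d m : nat) : 2 <= d -> 2 ^ m <= d ^ (2 * d) ->
  (INR m <= two_d_log2_d d)%R.
Proof.
  intros Hd Hp. destruct d as [|[|d']]; [lia|lia|].
  set (d := S (S d')).
  change (two_d_log2_d d) with (2 * INR d * (ln (INR d) / ln 2))%R.
  assert (Hl2 : (0 < ln 2)%R) by (pose proof ln_lt_2; lra).
  assert (Hdpos : (0 < INR d)%R) by (apply lt_0_INR; unfold d; lia).
  apply le_INR in Hp. rewrite !pow_INR in Hp.
  assert (Hln : (ln (INR 2 ^ m) <= ln (INR d ^ (2 * d)))%R).
  { destruct (Rle_lt_or_eq_dec _ _ Hp) as [lt|E].
    - left. apply ln_increasing; auto. apply pow_lt. simpl; lra.
    - rewrite E. apply Rle_refl. }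
  assert (H2 : (0 < INR 2)%R) by (simpl; lra).
  rewrite (ln_pow _ H2), (ln_pow _ Hdpos) in Hln.
  rewrite mult_INR in Hln. replace (INR 2) with 2%R in Hln by (simpl; lra).
  apply Rmult_le_reg_r with (ln 2); auto.
  replace (2 * INR d * (ln (INR d) / ln 2) * ln 2)%R with (2 * INR d * ln (INR d))%R by (field; lra).
  exact Hln.
Qed.

Theorem mainTheorem13 (X : Type) (H : hclass X) (d : nat) :
  LD_eq H d ->
  forall m : nat, clique_number_eq H m (2 ^ m) ->
  (INR m <= Rmax (two_d_log2_d d) 300)%R.
Proof.
  intros [Hsh Hmax] m [[C [[Hnd [Hv Hadj]] HlenC]] _].
  assert (HC : clq m H C).
  { split; [auto|split; auto]. intros S HS. destruct (Hv S HS) as [Hl Hr]. split; auto. lia. }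
  destruct (Nat.eq_dec m 0) as [->|Hm0].
  { simpl. apply Rle_trans with 300%R; [lra|apply Rmax_r]. }
  assert (Hlt : 2 ^ m < (2 * m) ^ (d + 1)).
  { destruct (le_lt_dec ((2 * m) ^ (d + 1)) (2 ^ m)) as [le|lt]; auto.
    exfalso. assert (Hs := shatter m (d+1) ltac:(lia) H C HC ltac:(lia)).
    apply Hmax in Hs. lia. }
  destruct (le_lt_dec m 300) as [Hs|Hb].
  - apply Rle_trans with 300%R; [|apply Rmax_r].
    apply Rle_trans with (INR 300); [apply le_INR; auto|].
    right. rewrite INR_IZR_INZ. reflexivity.
  - apply Rle_trans with (two_d_log2_d d); [|apply Rmax_l].
    pose proof (natmain d m ltac:(lia) Hlt) as Hp.
    apply real_part; auto.
    destruct (le_lt_dec 2 d) as [ok|small]; auto. exfalso.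
    assert (d ^ (2 * d) = 1) by (destruct d as [|[|]]; simpl; lia).
    assert (2 ^ 1 <= 2 ^ m) by (apply Nat.pow_le_mono_r; lia). simpl in *. lia.
Qed.
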